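(* Let $\mathcal{V}$ be a real vector space of dimension $d$, let $\tau\in\vee^2\mathcal{V}^*$ have rank $p+1$ and Lorentzian signature, and let $Lf_p(\mathcal{V},\tau)=\{(\tau_0,\dots,\tau_p)\in\mathcal{V}^{p+1}:\tau(\tau_A,\tau_B)=\eta_{AB}\}$ be the space of longitudinal frames. Then the longitudinal group $LG_p$, realised as the set of pairs $(\Lambda,V)$ with $\Lambda\in O(1,p)$ and $V=(V_0,\dots,V_p)\in\mathrm{Ker}(\tau)^{p+1}$, acts on $Lf_p(\mathcal{V},\tau)$ from the right by $\tau_A\cdot(\Lambda,V)={\Lambda^A}_B\tau_A+V_B$, and this action is free and transitive: for every $\tau_A,\tau'_A\in Lf_p(\mathcal{V},\tau)$ there is exactly one pair $(\Lambda,V)$ with $\tau'_B={\Lambda^A}_B\tau_A+V_B$. Thus $Lf_p(\mathcal{V},\tau)$ is an $LG_p$-torsor.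
   Context: $\eta_{AB}=\mathrm{diag}(-1,1,\dots,1)$; $\mathrm{Ker}(\tau)=\{v\in\mathcal{V}:\tau(v,\cdot)=0\}$, of dimension $d-p-1$. The longitudinal group $LG_p$ is the group of block matrices $\begin{pmatrix}\Lambda&0\\ v&\mathbb{1}\end{pmatrix}$ with $\Lambda\in O(1,p)$ and $v\in\mathbb{R}^{(d-p-1)\times(p+1)}$; its action on longitudinal frames is expressed with $V_B={v^i}_Be_i$ for a basis $e_i$ of $\mathrm{Ker}(\tau)$. *)

(* Defs.v *)
From HB Require Import structures.
From mathcomp Require Import all_boot all_order all_algebra.
From mathcomp Require Import reals.
Set Implicit Arguments. Unset Strict Implicit. Unset Printing Implicit Defensive.
Import Order.TTheory GRing.Theory Num.Theory.
Local Open Scope ring_scope.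

(* The vector space V of dimension d is modelled as row vectors 'rV[R]_d;
   a symmetric bilinear form tau on V is given by its Gram matrix T. *)
Definition tau (R : realType) (d : nat) (T : 'M[R]_d) (u w : 'rV[R]_d) : R :=
  (u *m T *m w^T) 0 0.

Definition eta (R : realType) (p : nat) : 'M[R]_(p.+1) :=
  \matrix_(A, B) (if A == B then (if A == ord0 then -1 else 1) else 0).

Definition lorentz_canon (R : realType) (d p : nat) : 'M[R]_d :=
  \matrix_(i, j) (if i == j then
                    (if (i : nat) == 0%N then -1 else if (i < p.+1)%N then 1 else 0)
                  else 0).

(* tau is symmetric, of rank p+1 and of Lorentzian signature (1,p)
   (Sylvester normal form diag(-1,1,..,1,0,..,0)). *)
Definition lorentzian_rank (R : realType) (d p : nat) (T : 'M[R]_d) : Prop :=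
  T^T = T /\ (p.+1 <= d)%N /\
  exists P : 'M[R]_d, P \in unitmx /\ T = P^T *m lorentz_canon R d p *m P.

Definition in_ker (R : realType) (d : nat) (T : 'M[R]_d) (v : 'rV[R]_d) : Prop :=
  forall w, tau T v w = 0.

Definition long_frame (R : realType) (d p : nat) (T : 'M[R]_d)
  (F : 'M[R]_(p.+1, d)) : Prop :=
  forall A B : 'I_p.+1, tau T (row A F) (row B F) = eta R p A B.

Definition lorentz_group (R : realType) (p : nat) (L : 'M[R]_(p.+1)) : Prop :=
  L^T *m eta R p *m L = eta R p.

Definition ker_tuple (R : realType) (d p : nat) (T : 'M[R]_d)
  (V : 'M[R]_(p.+1, d)) : Prop :=
  forall B : 'I_p.+1, in_ker T (row B V).

Definition in_LG (R : realType) (d p : nat) (T : 'M[R]_d)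
  (L : 'M[R]_(p.+1)) (V : 'M[R]_(p.+1, d)) : Prop :=
  lorentz_group L /\ ker_tuple T V.

Definition lact (R : realType) (d p : nat) (F : 'M[R]_(p.+1, d))
  (L : 'M[R]_(p.+1)) (V : 'M[R]_(p.+1, d)) : 'M[R]_(p.+1, d) :=
  \matrix_(B < p.+1) (\sum_(A < p.+1) L A B *: row A F + row B V).

(* group law of LG_p in pair form (product of block matrices
   [[Lambda,0],[v,1]]): (L,V)(L',V') = (L L', V.L' + V') with
   (V.L')_B = L'^A_B V_A *)
Definition lg_mul (R : realType) (d p : nat)
  (x y : 'M[R]_(p.+1) * 'M[R]_(p.+1, d)) : 'M[R]_(p.+1) * 'M[R]_(p.+1, d) :=
  (x.1 *m y.1, \matrix_(B < p.+1) (\sum_(A < p.+1) y.1 A B *: row A x.2) + y.2).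

(* Main.v *)
Require Import Defs.
From HB Require Import structures.
From mathcomp Require Import all_boot all_order all_algebra.
From mathcomp Require Import reals.
Import Order.TTheory GRing.Theory Num.Theory.
Local Open Scope ring_scope.

Section Aux.
Variable R : realType.

Lemma tau_rows (d m n : nat) (T : 'M[R]_d) (X : 'M[R]_(m, d)) (Y : 'M[R]_(n, d)) A B :
  tau T (row A X) (row B Y) = (X *m T *m Y^T) A B.
Proof.
rewrite /tau -row_mul tr_row colE mulmxA -row_mul -mulmxA -colE.
by rewrite !mxE.
Qed.

Lemma frameE (d p : nat) (T : 'M[R]_d) (F : 'M[R]_(p.+1, d)) :
  long_frame T F <-> F *m T *m F^T = Defs.eta R p.
Proof.
split => [H|H A B]; last by rewrite tau_rows H.
by apply/matrixP => A B; rewrite -tau_rows H.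
Qed.

Lemma kerE (d : nat) (T : 'M[R]_d) (v : 'rV[R]_d) : in_ker T v <-> v *m T = 0.
Proof.
split => [H|H w]; last by rewrite /tau H mul0mx mxE.
apply/matrixP => i j; rewrite (ord1 i) [RHS]mxE.
have H0 := H (delta_mx 0 j).
rewrite /tau trmx_delta -colE in H0.
by move: H0; rewrite mxE.
Qed.

Lemma ker_tupleE (d p : nat) (T : 'M[R]_d) (V : 'M[R]_(p.+1, d)) :
  ker_tuple T V <-> V *m T = 0.
Proof.
split => [H|H B].
  apply/row_matrixP => B; rewrite row_mul row0; exact/kerE.
by apply/kerE; rewrite -row_mul H row0.
Qed.

Lemma lactE (d p : nat) (F : 'M[R]_(p.+1, d)) L V :
  lact F L V = L^T *m F + V.
Proof.
apply/row_matrixP => B; rewrite rowK linearD /= row_mul mulmx_sum_row.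
by congr (_ + _); apply: eq_bigr => k _; rewrite !mxE.
Qed.

Lemma lgmul2E (d p : nat) (L L' : 'M[R]_(p.+1)) (V V' : 'M[R]_(p.+1, d)) :
  (lg_mul (L, V) (L', V')).2 = L'^T *m V + V'.
Proof.
rewrite /lg_mul /=; congr (_ + _).
apply/row_matrixP => B; rewrite rowK row_mul mulmx_sum_row.
by apply: eq_bigr => k _; rewrite !mxE.
Qed.

Lemma eta_tr p : (Defs.eta R p)^T = Defs.eta R p.
Proof.
apply/matrixP => i j; rewrite /Defs.eta !mxE eq_sym.
by case: eqP => // ->.
Qed.

Lemma etaE p (i j : 'I_p.+1) :
  Defs.eta R p i j = if i == j then (if i == ord0 then -1 else 1) else 0.
Proof. by rewrite /Defs.eta mxE. Qed.

Lemma eta_sq p : Defs.eta R p *m Defs.eta R p = 1%:M.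
Proof.
apply/matrixP => i j; rewrite mxE (bigD1 i) //= big1 => [|k /negbTE ki].
  rewrite !etaE mxE eqxx addr0; case: (i =P j) => [->|_]; last by rewrite mulr0.
  by case: (j == ord0); rewrite ?mulrNN ?mulr1.
by rewrite !etaE eq_sym ki mul0r.
Qed.

End Aux.

Theorem proposition2 (R : realType) (d p : nat) (T : 'M[R]_d) :
  @lorentzian_rank R d p T ->
  (* the action is well defined on Lf_p(V, tau) *)
  (forall (F : 'M[R]_(p.+1, d)) (L : 'M[R]_(p.+1)) (V : 'M[R]_(p.+1, d)), long_frame T F -> in_LG T L V -> long_frame T (lact F L V)) /\
  (* it is a right action *)
  (forall F : 'M[R]_(p.+1, d), lact F 1%:M 0 = F) /\
  (forall (F : 'M[R]_(p.+1, d)) (L L' : 'M[R]_(p.+1)) (V V' : 'M[R]_(p.+1, d)), in_LG T L V -> in_LG T L' V' ->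
     lact (lact F L V) L' V' =
     lact F (lg_mul (L, V) (L', V')).1 (lg_mul (L, V) (L', V')).2) /\
  (* it is free and transitive *)
  (forall F F' : 'M[R]_(p.+1, d), long_frame T F -> long_frame T F' ->
     exists (L : 'M[R]_(p.+1)) (V : 'M[R]_(p.+1, d)), (in_LG T L V /\ F' = lact F L V) /\
       forall (L2 : 'M[R]_(p.+1)) (V2 : 'M[R]_(p.+1, d)), in_LG T L2 V2 -> F' = lact F L2 V2 -> L2 = L /\ V2 = V).
Proof.
move=> [Tsym [pd [P [Pu TE]]]].
have TVt (V : 'M[R]_(p.+1, d)) : V *m T = 0 -> T *m V^T = 0.
  by move=> H; rewrite -Tsym -trmx_mul H trmx0.
split.
  move=> F L V /frameE HF [HL /ker_tupleE HV]; apply/frameE.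
  have trD (X Y : 'M[R]_(p.+1, d)) : (X + Y)^T = X^T + Y^T by apply/matrixP => i j; rewrite !mxE.
  rewrite lactE !mulmxDl !trD !mulmxDr HV !mul0mx !addr0.
  rewrite -(mulmxA _ T V^T) TVt // mulmx0 addr0 trmx_mul trmxK.
  have -> : L^T *m F *m T *m (F^T *m L) = L^T *m (F *m T *m F^T) *m L by rewrite !mulmxA.
  by rewrite HF.
split.
  by move=> F; rewrite lactE trmx1 mul1mx addr0.
split.
  move=> F L L' V V' _ _; rewrite !lactE lgmul2E /= trmx_mul.
  by rewrite mulmxDr addrA mulmxA.
move=> F F' /frameE HF /frameE HF'.
set E := Defs.eta R p.
have EE : E *m E = 1%:M by apply: eta_sq.
have Et : E^T = E by apply: eta_tr.
have rkE : \rank E = p.+1 by apply: mxrank_unit; case: (mulmx1_unit EE).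
have rkT : (\rank T <= p.+1)%N.
  rewrite TE; apply: leq_trans (mxrankM_maxl _ _) _.
  apply: leq_trans (mxrankM_maxr _ _) _.
  have -> : lorentz_canon R d p = pid_mx p.+1 *m lorentz_canon R d p.
    apply/matrixP => i j; rewrite [RHS]mxE (bigD1 i) //= big1 => [|k ki].
      rewrite addr0 /pid_mx !mxE eqxx /=.
      case: (ltnP i p.+1) => hi; first by rewrite mul1r.
      rewrite mul0r; case: (i =P j) => // _.
      by rewrite ifN // -lt0n; apply: leq_trans hi.
    rewrite /pid_mx mxE; case: eqP => [/ord_inj ik|_]; first by rewrite ik eqxx in ki.
    by rewrite mul0r.
  apply: leq_trans (mxrankM_maxl _ _) _.
  by rewrite rank_pid_mx.
have key : forall G : 'M[R]_(p.+1, d), G *m T *m G^T = E ->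
    T *m G^T *m E *m G *m T = T.
  move=> G HG.
  have sMT : (G *m T <= T)%MS by apply: submxMl.
  have rkM : (p.+1 <= \rank (G *m T))%N.
    by rewrite -[X in (X <= _)%N]rkE -HG; apply: mxrankM_maxl.
  have : (T <= G *m T)%MS.
    rewrite -(mxrank_leqif_sup sMT).2 eqn_leq mxrankS //=.
    exact: leq_trans rkT rkM.
  case/submxP => X HX.
  rewrite {1}HX.
  have -> : X *m (G *m T) *m G^T *m E *m G *m T
      = X *m (G *m T *m G^T) *m E *m (G *m T) by rewrite !mulmxA.
  by rewrite HG -(mulmxA X) EE mulmx1 -HX.
have K := key F HF.
set L0 := F' *m T *m F^T *m E.
have L0t : L0^T = E *m F *m T *m F'^T.
  by rewrite /L0 !trmx_mul Et Tsym trmxK !mulmxA.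
exists L0^T, (F' - L0 *m F).
have lactE' (L : 'M[R]_(p.+1)) V : lact F L V = L^T *m F + V by apply: lactE.
split.
  split; last by rewrite lactE' trmxK addrC subrK.
  split.
    rewrite /lorentz_group trmxK L0t /L0 -/E.
    have -> : F' *m T *m F^T *m E *m E *m (E *m F *m T *m F'^T)
       = F' *m (T *m F^T *m E *m F *m T) *m F'^T.
      by rewrite !mulmxA -(mulmxA _ E E) EE mulmx1 ?mulmxA.
    by rewrite K.
  apply/ker_tupleE.
  rewrite mulmxBl /L0 -/E.
  have -> : F' *m T *m F^T *m E *m F *m T = F' *m (T *m F^T *m E *m F *m T) by rewrite !mulmxA.
  by rewrite K subrr.
move=> L2 V2 [_ /ker_tupleE HV2]; rewrite lactE' => HF2.
have HL2 : L2^T = L0.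
  have : F' *m T *m F^T = L2^T *m E.
    rewrite HF2 mulmxDl mulmxDl HV2 mul0mx addr0.
    by rewrite /E -HF !mulmxA.
  move=> H; rewrite /L0 H -mulmxA EE mulmx1 //.
have -> : L2 = L0^T by rewrite -HL2 trmxK.
split => //.
by rewrite HF2 HL2 addrC addKr.
Qed.
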